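(* Let $k\ge2$ and $G=\mathrm{BS}(1,k)\cong\mathbb Z[\tfrac1k]\rtimes_\varphi\langle t\rangle$ with $\varphi(x)=kx$. Let $n\in\mathbb Z$ and let $A=\{(a_1,t^n),\dots,(a_r,t^n)\}\subseteq G$ be a finite set of $r$ distinct elements all with $t$-exponent sum $n$. Then there exist integers $N_1,N_2\ge0$ and a positive integer $L$ such that, with $g=t^{N_1}\,(L,1)\,t^{N_2}\in G$, the $r$ elements of $gA$ lie in pairwise distinct conjugacy classes of $G$, i.e. $c(gA)=|A|$.
   Context: Elements of $G$ are pairs $(x,t^m)$, $x\in\mathbb Z[1/k]$, with $(x,t^m)(x',t^{m'})=(x+k^mx',t^{m+m'})$; $t^m$ denotes $(0,t^m)$ and the $t$-exponent sum of $(x,t^m)$ is $m$. For $B\subseteq G$, $c(B)$ is the number of distinct conjugacy classes meeting $B$. *)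

(* Defs.v *)
From mathcomp Require Import all_boot all_order all_algebra.
Set Implicit Arguments. Unset Strict Implicit. Unset Printing Implicit Defensive.
Import Order.TTheory GRing.Theory Num.Theory.
Local Open Scope ring_scope.

Definition inZk (k : nat) (x : rat) : Prop :=
  exists (a : int) (j : nat), x = a%:~R / (k%:R ^+ j).

(* elements (x, t^m) of BS(1,k): pairs (x,m) with x in Z[1/k] *)
Definition BSel := (rat * int)%type.
Definition inBS (k : nat) (g : BSel) : Prop := inZk k g.1.

Definition bsmul (k : nat) (g h : BSel) : BSel :=
  (g.1 + (k%:R : rat) ^ g.2 * h.1, g.2 + h.2).
Definition bsinv (k : nat) (g : BSel) : BSel :=
  (- ((k%:R : rat) ^ (- g.2) * g.1), - g.2).

Definition tpow (m : int) : BSel := (0, m).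

Definition bsconj (k : nat) (g h : BSel) : Prop :=
  exists u : BSel, inBS k u /\ bsmul k (bsmul k u g) (bsinv k u) = h.

(* Main.v *)
Require Import Defs.
From mathcomp Require Import all_boot all_order all_algebra zify ring.
Import Order.TTheory GRing.Theory Num.Theory.
Local Open Scope ring_scope.
Local Open Scope nat_scope.

Lemma modMl (M c a b : nat) : a = b %[mod M] -> c * a = c * b %[mod M].
Proof. by move=> H; rewrite -modnMmr H modnMmr. Qed.

Lemma kpow_mod (k m q r : nat) : 0 < k -> k ^ (q * m + r) = k ^ r %[mod k ^ m - 1].
Proof.
move=> k0; have km : k ^ m %% (k ^ m - 1) = 1 %% (k ^ m - 1).
  by rewrite -{1}(subnK (_ : 0 < k ^ m)) ?expn_gt0 ?k0 // modnDl.
rewrite expnD (mulnC q m) expnM -modnMml -(modnXm q (k ^ m - 1) (k ^ m)) km modnXm exp1n modnMml mul1n //.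
Qed.

Lemma small_lt (k h e x : nat) : 1 < k -> 0 < h -> e <= h -> x < k ^ h -> k ^ e * x < k ^ (h + h) - 1.
Proof.
move=> k1 h0 eh xh; have : k ^ e <= k ^ h by rewrite leq_pexp2l // ltnW.
case: h h0 eh xh => [|h] // _ eh xh.
have : 2 <= k ^ h.+1.
  by apply: leq_trans (ltn_expl h.+1 k1).
rewrite expnD; set P := k ^ h.+1; set Q := k ^ e => P2 QP; nia.
Qed.

Lemma nat_part (k h u v A B : nat) : 1 < k -> 0 < h -> u < k ^ h -> v < k ^ h ->
  k ^ A * u = k ^ B * v %[mod k ^ (h + h) - 1] ->
  exists e, e <= h /\ (u = k ^ e * v \/ v = k ^ e * u).
Proof.
move=> k1 h0 uh vh H; set m := h + h in H *; set M := k ^ m - 1 in H *.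
have k0 : 0 < k by apply: ltnW.
have H1 : u = k ^ (B + (m - 1) * A) * v %[mod M].
  have := modMl _ (k ^ ((m - 1) * A)) _ _ H.
  rewrite !mulnA -!expnD.
  have -> : (m - 1) * A + A = A * m + 0.
    rewrite addn0 mulnC -{2}(muln1 A) -mulnDr subnK //.
    by case: (h) uh => [|h'] //=; rewrite /m; lia.
  rewrite (addnC B) -modnMml (kpow_mod k m A 0 k0) modnMml expn0 mul1n => <- //.
set C := B + (m - 1) * A in H1.
have mpos : 0 < m.
  by rewrite /m addn_gt0 h0.
have H2 : u = k ^ (C %% m) * v %[mod M].
  by rewrite H1 {1}(divn_eq C m) -modnMml (kpow_mod k m _ _ k0) modnMml.
have rm : C %% m < m by rewrite ltn_mod.
have sm e x : e <= h -> x < k ^ h -> k ^ e * x < M := small_lt k h e x k1 h0.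
have uM : u < M by have := sm 0 u (leq0n h) uh; rewrite expn0 mul1n.
have vM : v < M by have := sm 0 v (leq0n h) vh; rewrite expn0 mul1n.
case: (leqP (C %% m) h) => rh.
  exists (C %% m); split => //; left.
  by move: H2; rewrite (modn_small uM) modn_small // sm.
have mh : m - C %% m <= h by rewrite /m leq_subLR leq_add2r ltnW.
exists (m - C %% m); split => //.
right.
have H3 := modMl _ (k ^ (m - C %% m)) _ _ H2.
rewrite mulnA -expnD (subnK (ltnW rm)) in H3.
have km : k ^ m * v = k ^ (1 * m + 0) * v by rewrite mul1n addn0.
have H4 : (k ^ (1 * m + 0) * v) %% M = v %% M.
  by rewrite -modnMml (kpow_mod k m _ _ k0) modnMml expn0 mul1n.
rewrite km H4 in H3.
move: H3; rewrite (modn_small vM) modn_small ?sm // => ->.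
Qed.
Local Open Scope ring_scope.

Lemma natz_r (n : nat) : (n%:Z)%:~R = n%:R :> rat.
Proof. by []. Qed.

Lemma bound_seq (k : nat) (a : seq rat) : (0 < k)%N ->
  (forall x, x \in a -> inZk k x) ->
  exists E Y : nat, forall x, x \in a -> exists z : int,
    (k%:R : rat) ^+ E * x = z%:~R /\ (absz z <= Y)%N.
Proof.
move=> k0; elim: a => [|x a IH] H.
  by exists 0%N, 0%N.
have [|E [Y HY]] := IH; first by move=> y ya; apply: H; rewrite inE ya orbT.
have [c [j hx]] := H x (mem_head _ _).
have Kj0 : (k%:R : rat) ^+ j != 0 by rewrite expf_eq0 pnatr_eq0 andbC; case: (k) k0.
exists (E + j)%N, (maxn (absz c * k ^ E) (Y * k ^ j)) => y; rewrite inE => /orP [/eqP ->|ya].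
  exists (c * (k ^ E)%:Z); split.
    by rewrite hx exprD rmorphM /= natz_r natrX; field.
  by rewrite abszM /= leq_maxl.
have [z [hz zY]] := HY y ya.
exists (z * (k ^ j)%:Z); split.
  by rewrite exprD mulrAC hz rmorphM /= natz_r natrX mulrC.
by rewrite abszM /= (leq_trans _ (leq_maxr _ _)) // leq_mul2r zY orbT.
Qed.

Lemma no_mult (Y u v t : nat) : (2 <= t)%N -> u = (t * v)%N ->
  (2 * Y + 1 <= u <= 4 * Y + 1)%N -> (2 * Y + 1 <= v <= 4 * Y + 1)%N -> False.
Proof. move=> *; nia. Qed.

Lemma split_pow (K : rat) (p : int) : exists al be : nat, K ^ p = K ^+ al / K ^+ be.
Proof.
case: p => [a|b]; first by exists a, 0%N; rewrite expr0 divr1.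
by exists 0%N, b.+1; rewrite expr0 div1r.
Qed.

Theorem lemma5p3 (k : nat) (hk : (2 <= k)%N) (n : int) (a : seq rat)
  (ha : forall x, x \in a -> inZk k x) (huniq : uniq a) :
  exists (N1 N2 : nat) (L : nat), (0 < L)%N /\
    let g := bsmul k (bsmul k (tpow N1%:Z) (L%:~R, 0)) (tpow N2%:Z) in
    forall x y, x \in a -> y \in a -> x <> y ->
      ~ bsconj k (bsmul k g (x, n)) (bsmul k g (y, n)).
Proof.
have k0 : (0 < k)%N by apply: leq_trans hk.
have k1 : (1 < k)%N by [].
have [E [Y HY]] := bound_seq k a k0 ha.
set L := (3 * Y + 1)%N.
set h := (4 * Y + 2 + E + absz n)%N.
have hpos : (0 < h)%N by rewrite /h addn_gt0 addn_gt0 addn_gt0 orbT.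
have Bh : (4 * Y + 2 < k ^ h)%N.
  by apply: leq_ltn_trans (ltn_expl h k1); rewrite /h -addnA leq_addr.
set N1 := absz ((h + h)%N%:Z - E%:Z - n)%R.
have hm : (N1%:Z + 0 + E%:Z + n) = (h + h)%N%:Z by rewrite /N1 /h; lia.
exists N1, E, L; split; first by rewrite /L addn1.
move=> g x y xa ya xy [[w p] [[c [j hw]] heq]].
move: heq; rewrite /g /bsmul /bsinv /tpow /= => [[]] + _.
rewrite hm.
set K := (k%:R : rat).
have K0 : K != 0 by rewrite pnatr_eq0; case: (k) k0.
have KX0 e : K ^+ e != 0 by rewrite expf_eq0 (negbTE K0) andbF.
have [zx [hzx zxY]] := HY x xa.
have [zy [hzy zyY]] := HY y ya.
set sx := absz (L%:Z + zx)%R.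
set sy := absz (L%:Z + zy)%R.
have sxZ : sx%:Z = L%:Z + zx by rewrite /sx /L; lia.
have syZ : sy%:Z = L%:Z + zy by rewrite /sy /L; lia.
have sxb : (2 * Y + 1 <= sx <= 4 * Y + 1)%N by rewrite /sx /L; lia.
have syb : (2 * Y + 1 <= sy <= 4 * Y + 1)%N by rewrite /sy /L; lia.
have sxR : (sx%:R : rat) = L%:R + K ^+ E * x.
  by rewrite -natz_r sxZ rmorphD /= hzx.
have syR : (sy%:R : rat) = L%:R + K ^+ E * y.
  by rewrite -natz_r syZ rmorphD /= hzy.
rewrite !addr0 !add0r !mulr0 !addr0 -!PoszD -!exprnP expfzDr // -exprnP -invr_expz.
have [al [be hp]] := split_pow K p.
rewrite hp (hw : w = _) natz_r => eq1.
have sye : (sy%:R : rat) = (c%:~R / K ^+ j + K ^+ al / K ^+ be * (K ^+ N1 * L%:R + K ^+ (N1 + E) * x)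
   + K ^+ al / K ^+ be * K ^+ (h + h) * - ((K ^+ al / K ^+ be)^-1 * (c%:~R / K ^+ j))) / K ^+ N1.
  by rewrite eq1 syR exprD; field.
have Zeq : ((k ^ (al + j + N1) * sx)%N%:Z + c * (k ^ be)%N%:Z * (1 - (k ^ (h + h))%N%:Z)
    = (k ^ (be + j + N1) * sy)%N%:Z).
  apply: (@intr_inj rat).
  rewrite !rmorphD !rmorphM !rmorphB /= !rmorph1 !natz_r.
  rewrite !natrX -/K sye sxR !exprD.
  by field; rewrite !KX0.
have Hmod : (k ^ (al + j + N1) * sx = k ^ (be + j + N1) * sy %[mod k ^ (h + h) - 1])%N.
  apply/eqP; rewrite -eqz_nat -!modz_nat -Zeq -subzn ?expn_gt0 ?k0 //.
  rewrite (_ : c * (k ^ be)%N%:Z * (1 - (k ^ (h + h))%N%:Z) = (- (c * (k ^ be)%N%:Z)) * ((k ^ (h + h))%N%:Z - 1%N%:Z)); last by ring.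
  by apply/eqP; rewrite [in RHS]addrC modzMDl.
have Bh' : (4 * Y + 1 < k ^ h)%N by move: Bh; set P := (k ^ h)%N; lia.
have same : sx = sy -> False.
  move=> E'; apply: xy; apply: (mulfI (KX0 E)); apply: (addrI (L%:R)).
  by rewrite -sxR -syR E'.
have kpow e' : (2 <= k ^ e'.+1)%N.
  by apply: leq_trans hk _; rewrite -{1}(expn1 k) leq_pexp2l.
have [e [eh [H|H]]] := nat_part k h sx sy _ _ k1 hpos
  (leq_ltn_trans (proj2 (andP sxb)) Bh')
  (leq_ltn_trans (proj2 (andP syb)) Bh') Hmod.
- case: e eh H => [|e] _ H.
    by apply: same; rewrite H expn0 mul1n.
  exact: (no_mult _ _ _ _ (kpow e) H sxb syb).
- case: e eh H => [|e] _ H.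
    by apply: same; rewrite H expn0 mul1n.
  exact: (no_mult _ _ _ _ (kpow e) H syb sxb).
Qed.
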